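(* Fix an integer $M\ge 6$ and a time $t>M$ of an insertion-only edge stream, so $|E^{(t)}|=t$. Let $\mathcal{S}_{\mathrm{mix}}$ be the sample of $M$ edges from $E^{(t)}$ obtained by reservoir sampling with capacity $M$ (as described in the context), and let $\mathcal{S}_{\mathrm{in}}$ be obtained by including each edge of $E^{(t)}$ independently with probability $M/t$. Let $f:2^{E^{(t)}}\to\{0,1\}$ be an arbitrary function. Then \[ \Pr\left(f(\mathcal{S}_{\mathrm{mix}})=1\right)\le e\sqrt{M}\,\Pr\left(f(\mathcal{S}_{\mathrm{in}})=1\right). \]
   Context: An insertion-only edge stream: at each time step $s=1,2,\dots$ an edge $e_s$ between two distinct vertices arrives, which is not already present; $E^{(t)}=\{e_1,\dots,e_t\}$. Reservoir sampling with capacity $M$: the sample starts empty; at time $s$, if $s\le M$ the edge $e_s$ is inserted; if $s>M$, with probability $M/s$ an edge chosen uniformly at random from the sample is removed and $e_s$ is inserted, otherwise the sample is unchanged. $\mathcal{S}_{\mathrm{mix}}$ is the sample at the end of time step $t$. *)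

(* Defs.v *)
From mathcomp Require Import all_boot all_order all_algebra.
From mathcomp Require Import reals sequences.
Set Implicit Arguments. Unset Strict Implicit. Unset Printing Implicit Defensive.
Import Order.TTheory GRing.Theory Num.Theory.
Local Open Scope ring_scope.

(* Edges of E^(t) are identified with their arrival indices: the edge e_s
   (arriving at time s, 1 <= s <= t) is the ordinal i : 'I_t with val i = s-1.
   A (random) sample is a subset of 'I_t; a distribution is a function
   {set 'I_t} -> R giving the probability of each possible sample. *)

Section Sampling.
Variables (R : realType) (t : nat).

Definition new_edge (s : nat) : {set 'I_t} := [set i : 'I_t | val i == s.-1].

(* transition kernel of reservoir sampling with capacity M at time s:
   probability of moving from sample S' (end of time s-1) to S (end of time s) *)
Definition res_step (M s : nat) (S' S : {set 'I_t}) : R :=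
  if (s <= M)%N then (S == S' :|: new_edge s)%:R
  else (1 - M%:R / s%:R) * (S == S')%:R
       + (M%:R / s%:R) *
         \sum_(x in S') (#|S'|%:R)^-1 * (S == (S' :\ x) :|: new_edge s)%:R.

Fixpoint reservoir (M s : nat) (S : {set 'I_t}) : R :=
  match s with
  | 0 => (S == set0)%:R
  | s'.+1 => \sum_(S' : {set 'I_t}) reservoir M s' S' * res_step M s S' S
  end.

Definition bernoulli_sample (p : R) (S : {set 'I_t}) : R :=
  p ^+ #|S| * (1 - p) ^+ (t - #|S|).

End Sampling.

(* Main.v *)
Require Import Defs.
From mathcomp Require Import all_boot all_order all_algebra.
From mathcomp Require Import reals sequences.
From mathcomp Require Import exp topology normedtype.
From mathcomp Require Import ring lra zify.
Import Order.TTheory GRing.Theory Num.Theory.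
Local Open Scope ring_scope.

Lemma pow2_fact k : (2 ^ k <= k.+1`!)%N.
Proof.
elim: k => [//|k IH]; rewrite expnS factS.
by apply: leq_mul => //.
Qed.

Lemma expR2_le (R : realType) (y : R) : 0 <= y -> y < 1 ->
  (1 - y) * expR (2 * y) <= 1 + y.
Proof.
move=> y0 y1.
have key k : (1 - y) * \sum_(0 <= i < k.+1) exp_coeff (2 * y) i + 2 * y ^+ k.+1 <= 1 + y.
  elim: k => [|k IH].
    rewrite big_nat1 /exp_coeff /= expr0 expr1 divr1; lra.
  rewrite big_nat_recr //= mulrDr.
  have ck : exp_coeff (2 * y) k.+1 <= 2 * y ^+ k.+1.
    rewrite /exp_coeff /= exprMn ler_pdivrMr ?ltr0n ?fact_gt0 //.
    rewrite mulrAC ler_wpM2r ?exprn_ge0 //.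
    rewrite -natrX -natrM ler_nat factS expnS.
    by apply: leq_mul => //; exact: pow2_fact.
  have h1 : (1 - y) * exp_coeff (2 * y) k.+1 <= (1 - y) * (2 * y ^+ k.+1).
    by rewrite ler_wpM2l // subr_ge0 ltW.
  have -> : y ^+ k.+2 = y * y ^+ k.+1 by rewrite exprS.
  lra.
rewrite /expR.
have cv := is_cvg_series_exp_coeff (2 * y).
rewrite -ler_pdivlMl ?subr_gt0 //.
have all k : series (exp_coeff (2 * y)) k <= (1 - y)^-1 * (1 + y).
  rewrite ler_pdivlMl ?subr_gt0 //.
  case: k => [|k]; first by rewrite /series /= big_geq //= mulr0; lra.
  have := key k; have : 0 <= 2 * y ^+ k.+1 by rewrite mulr_ge0 ?exprn_ge0.
  rewrite /series /=; lra.
apply: limr_le => //.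
by near=> k; apply: all.
Unshelve. all: by end_near.
Qed.

Section An.
Variable R : realType.

Lemma lemA (n : nat) : (0 < n)%N ->
  expR 2 * (n%:R : R) ^+ (2 * n).+1 <= (n.+1%:R) ^+ (2 * n).+1.
Proof.
move=> n0.
set m := (2 * n).+1.
have m0 : (0 : R) < m%:R by rewrite ltr0n.
have n0' : (0 : R) < n%:R by rewrite ltr0n.
set y : R := (m%:R)^-1.
have y0 : 0 <= y by rewrite invr_ge0 ltW.
have y1 : y < 1 by rewrite invf_lt1 // /m ltr1n; lia.
have h := @expR2_le R y y0 y1.
have hm : (m%:R : R) = 2 * n%:R + 1 by rewrite /m -addn1 natrD natrM.
have h2 : (n%:R : R) * expR (2 * y) <= n.+1%:R.
  have e1 : 1 - y = 2 * n%:R / m%:R by rewrite /y hm; field; lra.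
  have e2 : 1 + y = 2 * n.+1%:R / m%:R by rewrite /y hm -addn1 natrD; field; lra.
  move: h; rewrite e1 e2.
  have -> : 2 * n%:R / m%:R * expR (2 * y) = (2 / m%:R) * (n%:R * expR (2*y)) by ring.
  have -> : 2 * n.+1%:R / m%:R = (2 / m%:R) * n.+1%:R :> R by ring.
  by rewrite ler_pM2l // divr_gt0.
have h3 := lerXn2r m (mulr_ge0 (ltW n0') (expR_ge0 _)) (ler0n _ _) h2.
have -> : expR 2 = expR (2 * y) ^+ m :> R.
  by rewrite -expRM_natl mulrCA /y mulfV ?mulr1 // gt_eqF.
by rewrite mulrC -exprMn.
Qed.

Definition g (n : nat) : R := n`!%:R * expR n%:R / n%:R ^+ n.

Lemma g_gt0 n : 0 < g n.
Proof.
rewrite /g divr_gt0 ?mulr_gt0 ?expR_gt0 ?ltr0n ?fact_gt0 //.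
by case: n => [|n]; rewrite ?expr0 // exprn_gt0 // ltr0n.
Qed.

Lemma gS n : g n.+1 = g n * (expR 1 * n%:R ^+ n / n.+1%:R ^+ n).
Proof.
rewrite /g factS natrM -addn1 natrD expRD /= addn1 exprS.
have h1 : (n.+1%:R : R) != 0 by rewrite pnatr_eq0.
have h2 : (n%:R : R) ^+ n != 0.
  by case: n {h1} => [|n]; rewrite ?expr0 ?oner_eq0 // expf_eq0 pnatr_eq0.
have h3 : (n.+1%:R : R) ^+ n != 0 by rewrite expf_eq0 (negPf h1) andbF.
field.
by rewrite natr1 h1 h2 h3.
Qed.

Lemma g_step n : g n <= g n.+1.
Proof.
rewrite gS -[leLHS]mulr1 ler_pM2l ?g_gt0 //.
case: n => [|n]; first by rewrite !expr0 divr1 mulr1; have := expR_ge1Dx (1 : R); lra.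
have n0 : (0 : R) < n.+1%:R by rewrite ltr0n.
rewrite ler_pdivlMr ?exprn_gt0 ?ltr0n // mul1r.
have h : (n.+2%:R : R) <= n.+1%:R * expR (n.+1%:R^-1).
  have := expR_ge1Dx (n.+1%:R^-1 : R).
  by rewrite -(ler_pM2l n0) mulrDr mulr1 mulfV ?gt_eqF // natr1.
have := lerXn2r n.+1 (ler0n _ _) (mulr_ge0 (ltW n0) (expR_ge0 _)) h.
by rewrite exprMn -expRM_natl mulfV ?gt_eqF // mulrC.
Qed.

Lemma g_mono m k : g m <= g (m + k).
Proof.
elim: k => [|k IH]; first by rewrite addn0.
by apply: le_trans IH _; rewrite addnS g_step.
Qed.

Lemma g_sq n : (0 < n)%N -> g n ^+ 2 <= expR 1 ^+ 2 * n%:R.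
Proof.
elim: n => [//|n IH _].
case: n IH => [_|n IH].
  by rewrite /g expr1 divr1 mul1r mulr1.
have IH' := IH isT.
rewrite gS exprMn.
set n1 := n.+1 in IH' *.
have hA := @lemA n1 isT.
have p0 : (0 : R) < n1.+1%:R ^+ n1 by rewrite exprn_gt0 // ltr0n.
have q0 : (0:R) <= (expR 1 * n1%:R ^+ n1 / n1.+1%:R ^+ n1) ^+ 2.
  by rewrite exprn_ge0 // divr_ge0 ?mulr_ge0 ?expR_ge0 ?exprn_ge0.
apply: le_trans (ler_wpM2r q0 IH') _.
have e2 : expR 2 = expR 1 ^+ 2 :> R by rewrite -expRM_natl mulr1.
rewrite e2 in hA.
rewrite -[leLHS]mulrA ler_pM2l ?exprn_gt0 ?expR_gt0 //.
rewrite !exprMn exprVn -!exprM.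
have -> : (n1%:R : R) * (expR 1 ^+ 2 * n1%:R ^+ (n1 * 2) * (n1.+1%:R ^+ (n1 * 2))^-1)
   = expR 1 ^+ 2 * n1%:R ^+ (n1 * 2).+1 / n1.+1%:R ^+ (n1 * 2).
  rewrite [(n1%:R : R) ^+ (n1 * 2).+1]exprS.
  have : (n1.+1%:R : R) ^+ (n1 * 2) != 0 by rewrite gt_eqF // exprn_gt0 // ltr0n.
  move: ((n1.+1%:R : R) ^+ (n1 * 2)) ((n1%:R : R) ^+ (n1 * 2)) (expR 1 : R) (n1%:R : R) => B A E a hB.
  by field.
rewrite ler_pdivrMr ?exprn_gt0 ?ltr0n // -exprS mulnC.
exact: hA.
Qed.

Lemma g_le n : (0 < n)%N -> g n <= expR 1 * Num.sqrt n%:R.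
Proof.
move=> n0; have h := g_sq n n0.
rewrite -(ger0_norm (ltW (g_gt0 n))) -sqrtr_sqr.
rewrite -(ger0_norm (expR_ge0 (1 : R))) -sqrtr_sqr -sqrtrM ?sqr_ge0 //.
by rewrite ler_sqrt // mulr_ge0 ?sqr_ge0.
Qed.

Lemma g_bin M t : (M <= t)%N -> (0 < t)%N ->
  'C(t, M)%:R * (M%:R / t%:R) ^+ M * (1 - M%:R / t%:R) ^+ (t - M)
  = g t / (g M * g (t - M)) :> R.
Proof.
move=> Mt t0.
have t0' : (t%:R : R) != 0 by rewrite pnatr_eq0 -lt0n.
have -> : 1 - M%:R / t%:R = (t - M)%:R / t%:R :> R.
  by rewrite natrB // mulrBl divff.
rewrite /g -(bin_fact Mt) !natrM.
have -> : expR t%:R = expR M%:R * expR (t - M)%:R :> R.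
  by rewrite -expRD -natrD subnKC.
have -> : (t%:R : R) ^+ t = t%:R ^+ M * t%:R ^+ (t - M).
  by rewrite -exprD subnKC.
rewrite !expr_div_n.
have f1 : (M`!%:R : R) != 0 by rewrite pnatr_eq0 -lt0n fact_gt0.
have f2 : ((t - M)`!%:R : R) != 0 by rewrite pnatr_eq0 -lt0n fact_gt0.
have f3 : (t%:R : R) ^+ M != 0 by rewrite expf_eq0 (negPf t0') andbF.
have f4 : (t%:R : R) ^+ (t - M) != 0 by rewrite expf_eq0 (negPf t0') andbF.
have f5 : (M%:R : R) ^+ M != 0.
  by clear f1 f2 f3 f4; case: M Mt => [|M] _; rewrite ?expr0 ?oner_eq0 // expf_eq0 pnatr_eq0.
have f6 : ((t - M)%:R : R) ^+ (t - M) != 0.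
  by clear f1 f2 f3 f4 f5; case: (t - M)%N => [|k]; rewrite ?expr0 ?oner_eq0 // expf_eq0 pnatr_eq0.
have f7 := expR_gt0 (M%:R : R). have f8 := expR_gt0 ((t - M)%:R : R).
field.
by rewrite f1 f2 f3 f4 f5 f6 !gt_eqF.
Qed.

Lemma keyK M t : (0 < M)%N -> (M <= t)%N ->
  1 <= expR 1 * Num.sqrt (M%:R : R) *
       ('C(t, M)%:R * (M%:R / t%:R) ^+ M * (1 - M%:R / t%:R) ^+ (t - M)).
Proof.
move=> M0 Mt.
rewrite g_bin //; last by apply: leq_trans Mt.
have gM := g_gt0 M; have gtM := g_gt0 (t - M); have gt := g_gt0 t.
have hle : g (t - M) <= g t by have := g_mono (t - M) M; rewrite subnK.
apply: le_trans (_ : g M * (g t / (g M * g (t - M))) <= _); last first.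
  by rewrite ler_wpM2r ?g_le // ltW // divr_gt0 // mulr_gt0.
have -> : g M * (g t / (g M * g (t - M))) = g t / g (t - M).
  by field; rewrite !gt_eqF.
by rewrite ler_pdivlMr // mul1r.
Qed.
End An.

Section Comb.
Variables (R : realType) (t : nat).

Definition lts (s : nat) : {set 'I_t} := [set i : 'I_t | (i < s)%N].

Lemma sum_eq1 (F : {set 'I_t} -> R) A : \sum_(S' : {set 'I_t}) (S' == A)%:R * F S' = F A.
Proof.
rewrite (bigD1 A) //= eqxx mul1r big1 ?addr0 // => S' /negPf ->.
by rewrite mul0r.
Qed.

Lemma res_small M s S : (s <= M)%N -> reservoir R M s S = (S == lts s)%:R.
Proof.
elim: s S => [|s IH] S hs /=.
  by have -> : lts 0 = set0 by apply/setP => i; rewrite !inE.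
under eq_bigr => S' _ do rewrite IH ?(ltnW hs) //.
rewrite sum_eq1 /res_step hs.
have -> : lts s :|: new_edge t s.+1 = lts s.+1.
  by apply/setP => i; rewrite !inE /= [in RHS]ltnS [in RHS]leq_eqVlt orbC.
by [].
Qed.
Lemma card_lts s : (s <= t)%N -> #|lts s| = s.
Proof.
elim: s => [_|s IH hs].
  by apply/eqP; rewrite cards_eq0; apply/eqP/setP => i; rewrite !inE.
have -> : lts s.+1 = (Ordinal hs) |: lts s.
  apply/setP => i; rewrite !inE /= ltnS leq_eqVlt; congr (_ || _).
have h : (Ordinal hs \in lts s) = false by rewrite inE ltnn.
by rewrite cardsU1 h IH // ltnW.
Qed.
End Comb.

Section Pt.
Variables (R : realType) (t M s : nat) (hst : (s < t)%N).
Let e : 'I_t := Ordinal hst.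

Lemma e_notin_lts : e \notin lts t s.
Proof. by rewrite inE /= ltnn. Qed.

Lemma lts_S (y : 'I_t) : (y \in lts t s.+1) = (y == e) || (y \in lts t s).
Proof. by rewrite !inE -val_eqE /= ltnS leq_eqVlt. Qed.

Lemma P_iff (x : 'I_t) (S' S : {set 'I_t}) :
  [&& x \in S', #|S'| == M, S' \subset lts t s & S == e |: (S' :\ x)]
  = (S' == x |: (S :\ e)) &&
    [&& x \notin S, (x < s)%N, e \in S, #|S| == M & S \subset lts t s.+1].
Proof.
apply/idP/idP.
  move=> /and4P [xS' /eqP cS' sub /eqP ->].
  have eS' : e \notin S'.
    by apply/negP => /(subsetP sub); rewrite (negPf e_notin_lts).
  have eS'x : e \notin S' :\ x by rewrite inE (negPf eS') andbF.
  have xs : (x < s)%N by have := subsetP sub x xS'; rewrite inE.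
  have xe : x != e.
    by apply/negP => /eqP xe; rewrite xe in xS'; rewrite xS' in eS'.
  have hc : #|e |: (S' :\ x)| == M.
    by rewrite cardsU1 eS'x -cS' (cardsD1 x S') xS'.
  rewrite setU1K // setD1K // eqxx andTb.
  rewrite in_setU1 (negPf xe) setD11 xs setU11 hc.
  rewrite andTb andTb andTb.
  apply/subsetP => y; rewrite in_setU1 => /orP [/eqP ->|]; first by rewrite lts_S eqxx.
  by rewrite in_setD1 => /andP [_ /(subsetP sub) yS]; rewrite lts_S yS orbT.
move=> /andP [/eqP -> /and5P [xS xs eS /eqP cS sub]].
have xSe : x \notin S :\ e by rewrite inE (negPf xS) andbF.
have hc : #|x |: (S :\ e)| == M.
  by rewrite cardsU1 xSe -cS (cardsD1 e S) eS.
rewrite setU11 hc andTb andTb.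
rewrite setU1K // setD1K // eqxx andbT.
apply/subsetP => y; rewrite in_setU1 => /orP [/eqP ->|]; first by rewrite inE.
rewrite in_setD1 => /andP [ye /(subsetP sub)].
by rewrite lts_S (negPf ye).
Qed.


Lemma natr_and (a b : bool) : ((a && b)%:R : R) = a%:R * b%:R.
Proof. by case: a; case: b; rewrite ?mulr0 ?mulr1 ?mul0r. Qed.

Lemma sum_card (P : pred 'I_t) : \sum_(x : 'I_t) ((P x)%:R : R) = #|P|%:R.
Proof.
rewrite -sum1_card natr_sum [RHS]big_mkcond.
apply: eq_bigr => x _; have -> : (x \in P) = P x by []. by case: (P x).
Qed.

Lemma N_eq (S : {set 'I_t}) : (0 < M)%N ->
  \sum_(S' : {set 'I_t}) ((#|S'| == M) && (S' \subset lts t s))%:R *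
     \sum_(x in S') (S == e |: (S' :\ x))%:R
  = ((e \in S) && (#|S| == M) && (S \subset lts t s.+1))%:R * (s.+1 - M)%:R :> R.
Proof.
move=> M0.
have E1 (S' : {set 'I_t}) (x : 'I_t) :
    (if x \in S' then ((#|S'| == M) && (S' \subset lts t s))%:R *
      (S == e |: (S' :\ x))%:R else 0)
  = ([&& x \in S', #|S'| == M, S' \subset lts t s & S == e |: (S' :\ x)])%:R :> R.
  by case: (x \in S'); rewrite // -natr_and -andbA.
under eq_bigr => S' _ do rewrite mulr_sumr big_mkcond.
under eq_bigr => S' _ do under eq_bigr => x _ do rewrite E1.
rewrite exchange_big /=.
under eq_bigr => x _ do under eq_bigr => S' _ do rewrite P_iff natr_and.
under eq_bigr => x _ do rewrite sum_eq1.
case cond: ((e \in S) && (#|S| == M) && (S \subset lts t s.+1)); last first.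
  rewrite mul0r big1 // => x _.
  apply/eqP; rewrite pnatr_eq0 eqb0; apply/negP => /and5P [_ _ h1 h2 h3].
  by rewrite h1 h2 h3 in cond.
move/andP: cond => [/andP [eS /eqP cS] sub].
rewrite mul1r.
under eq_bigr => x _ do rewrite eS cS eqxx sub !andbT.
rewrite sum_card.
set B := S :\ e.
have Bsub : B \subset lts t s.
  apply/subsetP => y; rewrite in_setD1 => /andP [ye /(subsetP sub)].
  by rewrite lts_S (negPf ye).
have cB : #|B| = M.-1.
  have := cardsD1 e S; rewrite eS cS /B => ->. by [].
have -> : #|[pred x : 'I_t | (x \notin S) && (x < s)%N]| = #|lts t s :\: B|.
  apply: eq_card => x; rewrite !inE.
  case xs: (x < s)%N; rewrite ?andbF ?andbT //.
  have xe : x != e.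
    apply/eqP => xe. move: xs; rewrite xe. by rewrite /e /= ltnn.
  by rewrite xe.
have h := cardsID B (lts t s).
rewrite (setIidPr Bsub) cB (@card_lts t s (ltnW hst)) in h.
move: h; set X := #|_ :\: _| => h.
have -> : X = (s.+1 - M)%N by clear -h M0; lia.
by [].
Qed.
End Pt.

Section Main.
Variables (R : realType) (t : nat).

Lemma res_base M S : (M <= t)%N ->
  reservoir R M M S = ((#|S| == M) && (S \subset lts t M))%:R / 'C(M, M)%:R.
Proof.
move=> Mt.
rewrite res_small // binn divr1; congr (_%:R).
rewrite eqEcard (@card_lts t M Mt).
case sub: (S \subset lts t M); last by rewrite andbF.
have := subset_leq_card sub; rewrite (@card_lts t M Mt) => h.
by rewrite andbT eqn_leq h.
Qed.

Lemma res_unfold M s S : reservoir R M s.+1 S =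
  \sum_(S' : {set 'I_t}) reservoir R M s S' * res_step R M s.+1 S' S.
Proof. by []. Qed.

Lemma res_large M k S : (0 < M)%N -> (M + k <= t)%N ->
  reservoir R M (M + k) S =
  ((#|S| == M) && (S \subset lts t (M + k)))%:R / 'C(M + k, M)%:R.
Proof.
move=> M0; elim: k S => [|k IH] S hk.
  by rewrite addn0 res_base // -(addn0 M).
rewrite addnS in hk *.
set s := (M + k)%N in IH hk *.
have hs : (s < t)%N by [].
rewrite res_unfold.
under eq_bigr => S' _ do rewrite (IH _ (ltnW hs)) /res_step.
have -> : (s < M)%N = false by rewrite /s ltnNge leq_addr.
have -> : new_edge t s.+1 = [set Ordinal hs].
  by apply/setP => i; rewrite !inE -val_eqE.
set e := Ordinal hs.
set C : R := 'C(s, M)%:R.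
set a : R := M%:R / s.+1%:R.
have C0 : C != 0 by rewrite /C pnatr_eq0 -lt0n bin_gt0 /s leq_addr.
have M0' : (M%:R : R) != 0 by rewrite pnatr_eq0 -lt0n.
have T (S' : {set 'I_t}) :
   ((#|S'| == M) && (S' \subset lts t s))%:R / C *
     ((1 - a) * (S == S')%:R +
      a * \sum_(x in S') #|S'|%:R^-1 * (S == S' :\ x :|: [set e])%:R)
   = (1 - a) / C * ((S' == S)%:R * (#|S| == M)%:R * (S \subset lts t s)%:R)
     + a / (M%:R * C) * (((#|S'| == M) && (S' \subset lts t s))%:R *
         \sum_(x in S') (S == e |: (S' :\ x))%:R).
  case okS: ((#|S'| == M) && (S' \subset lts t s)).
    move/andP: okS => [/eqP cS' sub'].
    rewrite cS' -mulr_sumr.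
    under eq_bigr => x _ do rewrite setUC.
    case: (eqVneq S' S) => [eSS|nSS].
      rewrite -eSS cS' eqxx sub' !mulr1n; field.
      by rewrite C0 M0'.
    rewrite !mulr1n !mulr0n; field.
    by rewrite C0 M0'.
  case: (eqVneq S' S) => [eSS|nSS].
    by rewrite -eSS -!natr_and andTb okS !mulr0n !mul0r !mulr0 addr0.
  by rewrite !mulr0n !mul0r !mulr0 addr0.
under eq_bigr => S' _ do rewrite T.
rewrite big_split /= -!mulr_sumr.
under eq_bigr => i _ do rewrite -mulrA.
rewrite sum_eq1 (@N_eq R t M s hs S M0).
set C' : R := 'C(s.+1, M)%:R.
have C'0 : C' != 0 by rewrite /C' pnatr_eq0 -lt0n bin_gt0 /s; lia.
have s0 : (s.+1%:R : R) != 0 by rewrite pnatr_eq0.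
have KB : ((s.+1 - M)%N%:R : R) / (s.+1%:R * C) = 1 / C'.
  have h := mul_bin_down s.+1 M; rewrite /= in h.
  have h' : (s.+1%:R * C : R) = (s.+1 - M)%N%:R * C' by rewrite /C /C' -!natrM h.
  rewrite h'; field.
  have : (s.+1 - M)%N != 0%N by rewrite /s; lia.
  by rewrite C'0 pnatr_eq0 => ->.
have oa : 1 - a = (s.+1 - M)%N%:R / s.+1%:R.
  rewrite /a natrB ?mulrBl ?divff //.
  by rewrite /s; lia.
case eS: (e \in S).
  have -> : (S \subset lts t s) = false.
    apply/negP => /subsetP h; have := h e eS.
    by rewrite (negPf (@e_notin_lts t s hs)).
  rewrite mulr0n mulr0 mulr0 add0r andTb.
  case: (_ && _); last by rewrite !mulr0n !mul0r mulr0.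
  rewrite !mulr1n mul1r -KB /a; field.
  by rewrite (addrC 1) natr1 C0 s0 M0'.
have -> : (S \subset lts t s) = (S \subset lts t s.+1).
  apply/idP/idP => /subsetP h; apply/subsetP => y yS.
    by rewrite (@lts_S t s hs y) h ?orbT.
  have := h y yS; rewrite (@lts_S t s hs y); case/orP => [/eqP ye|//].
  by rewrite ye eS in yS.
rewrite andFb mulr0n mul0r mulr0 addr0 -natr_and.
case: (_ && _); last by rewrite !mulr0n !mul0r mulr0.
rewrite !mulr1n mulr1 oa -KB; field.
by rewrite (addrC 1) natr1 C0 s0.
Qed.
End Main.

Theorem lemma4p7 (R : realType) (M t : nat) (f : {set 'I_t} -> bool) :
  (6 <= M)%N -> (M < t)%N ->
  \sum_(S : {set 'I_t} | f S) reservoir R M t S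
    <= expR 1 * Num.sqrt (M%:R : R)
       * \sum_(S : {set 'I_t} | f S) @bernoulli_sample R t (M%:R / t%:R : R) S.
Proof.
move=> M6 Mt.
have M0 : (0 < M)%N by lia.
have Mt' : (M <= t)%N by lia.
have K := @keyK R M t M0 Mt'.
set p : R := M%:R / t%:R.
have t0 : (0 : R) < t%:R by rewrite ltr0n; lia.
have p0 : 0 <= p by rewrite /p divr_ge0.
have p1 : p <= 1 by rewrite /p ler_pdivrMr // mul1r ler_nat.
have C0 : (0 : R) < 'C(t, M)%:R by rewrite ltr0n bin_gt0.
have LT : lts t t = setT by apply/setP => i; rewrite !inE ltn_ord.
rewrite mulr_sumr; apply: ler_sum => S _.
have -> : reservoir R M t S = reservoir R M (M + (t - M)) S by rewrite subnKC.
rewrite res_large // ?subnKC // LT subsetT andbT.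
have bge : 0 <= @bernoulli_sample R t p S.
  by rewrite /bernoulli_sample mulr_ge0 // exprn_ge0 // subr_ge0.
case: (eqVneq #|S| M) => [cS|_]; last first.
  by rewrite mul0r mulr_ge0 // mulr_ge0 ?expR_ge0 ?sqrtr_ge0.
rewrite mul1r /bernoulli_sample cS.
rewrite -(ler_pM2l C0) mulfV ?gt_eqF //.
apply: (le_trans K); rewrite /p; rewrite le_eqVlt; apply/orP; left; apply/eqP; ring.
Qed.
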